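(* For all integers $m,n\ge 0$ and all real $t$, $$H_{m,n}(t)=m!\,n!\left(\frac{1}{\sqrt2}\right)^{m+n}\sum_{k=0}^{m}\sum_{j=0}^{n}\frac{H_{k,j}(t/\sqrt2)}{k!\,j!}\,\frac{H_{m-k,n-j}(t/\sqrt2)}{(m-k)!\,(n-j)!}.$$
   Context: For integers $m,n\ge 0$, the two-index Hermite polynomial is $H_{m,n}(x)=\left(-\frac{d}{dx}+2x\right)^m(x^n)$, i.e. the operator $f\mapsto -f'+2xf$ applied $m$ times to $x^n$. *)

(* Defs.v *)
From HB Require Import structures.
From mathcomp Require Import all_boot all_order all_algebra.
Set Implicit Arguments. Unset Strict Implicit. Unset Printing Implicit Defensive.
Import Order.TTheory GRing.Theory Num.Theory.
Local Open Scope ring_scope.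

Definition hermite_op (R : comNzRingType) (p : {poly R}) : {poly R} :=
  - p^`() + 2%:P * 'X * p.

Definition H2 (R : comNzRingType) (m n : nat) : {poly R} :=
  iter m (@hermite_op R) ('X^n).

(* Main.v *)
Require Import Defs.
From HB Require Import structures.
From mathcomp Require Import all_boot all_order all_algebra.
From mathcomp Require Import ring lra.
Import Order.TTheory GRing.Theory Num.Theory.
Local Open Scope ring_scope.

Section H.
Variable R : comNzRingType.
Implicit Types p q : {poly R}.

Lemma hopD p q : hermite_op (p + q) = hermite_op p + hermite_op q.
Proof. rewrite /hermite_op derivD; ring. Qed.

Lemma hopMn p k : hermite_op (p *+ k) = hermite_op p *+ k.
Proof.
elim: k => [|k IH]; first by rewrite !mulr0n /hermite_op deriv0; ring.
by rewrite !mulrS hopD IH.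
Qed.

Lemma H2S m n : H2 R m.+1 n = hermite_op (H2 R m n).
Proof. by rewrite /H2 iterS. Qed.

Lemma dH2 m n : (H2 R m n)^`() = H2 R m n.-1 *+ n + H2 R m.-1 n *+ (2 * m)%N.
Proof.
elim: m n => [|m IH] n.
  by rewrite /H2 /= derivXn muln0 mulr0n addr0.
rewrite H2S {1}/hermite_op derivD derivN derivM IH.
set P := (H2 R m n.-1 *+ n + H2 R m.-1 n *+ (2 * m)%N).
have -> : - P^`() + ((2%:P * 'X)^`() * H2 R m n + 2%:P * 'X * P)
   = hermite_op P + (2%:P * 'X)^`() * H2 R m n by rewrite /hermite_op; ring.
rewrite /P hopD !hopMn derivM derivC derivX mul0r add0r mulr1 -H2S /=.
rewrite polyC_natr mulr_natl.
case: m IH P => [|m] IH P.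
  by rewrite muln0 !mulr0n addr0.
by rewrite /= (mulnS 2 m.+1) mulrnDr -addrA [X in _ + X = _]addrC.
Qed.
End H.

Local Arguments H2 : simpl never.
Section G.
Variable R : numFieldType.

Lemma H2S_eval m n (x : R) : (H2 R m.+1 n).[x] =
  2 * x * (H2 R m n).[x] - (H2 R m n.-1).[x] *+ n - (H2 R m.-1 n).[x] *+ (2 * m)%N.
Proof.
by rewrite H2S /hermite_op dH2 !hornerE /= !hornerMn opprD addrC addrA.
Qed.

Lemma factR_neq0 n : (n`!)%:R != 0 :> R.
Proof. by rewrite pnatr_eq0 -lt0n fact_gt0. Qed.

Lemma natS_neq0 n : (n.+1)%:R != 0 :> R.
Proof. by rewrite pnatr_eq0. Qed.

Lemma natD_neq0 (a k : nat) : (a.+1)%:R + k%:R != 0 :> R.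
Proof. by rewrite -natrD pnatr_eq0 addSn. Qed.

Definition gg (x : R) k j := (H2 R k j).[x] / ((k`!)%:R * (j`!)%:R).
Definition sv (f : nat -> nat -> R) k j := if j is j'.+1 then f k j' else 0.
Definition su (f : nat -> nat -> R) k j := if k is k'.+1 then f k' j else 0.

Lemma gg_rec x k j : (k.+1)%:R * gg x k.+1 j =
  2 * x * gg x k j - sv (gg x) k j - 2 * su (gg x) k j.
Proof.
rewrite /gg H2S_eval.
have Hk := factR_neq0 k; have Hj := factR_neq0 j.
have Hk1 := natS_neq0 k; have Hj1 := natS_neq0 j.
case: j Hj Hj1 => [|j] Hj Hj1; case: k Hk Hk1 => [|k] Hk Hk1 /=;
  rewrite ?factS ?fact0 ?natrM.
- by field.
- have := natS_neq0 k; have := factR_neq0 k => ? ?.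
  by field; rewrite ?mulf_neq0 ?oner_neq0 ?(natD_neq0 0) ?(natD_neq0 1) ?factR_neq0.
- have := natS_neq0 j; have := factR_neq0 j => ? ?.
  by field; rewrite ?mulf_neq0 ?oner_neq0 ?(natD_neq0 0) ?(natD_neq0 1) ?factR_neq0.
- have := natS_neq0 k; have := factR_neq0 k => ? ?.
  have := natS_neq0 j; have := factR_neq0 j => ? ?.
  by field; rewrite ?mulf_neq0 ?oner_neq0 ?(natD_neq0 0) ?(natD_neq0 1) ?factR_neq0.
Qed.

End G.

Arguments sv {R}.
Arguments su {R}.
Arguments gg {R}.
Section C.
Variable R : numFieldType.
Implicit Types a b g : nat -> nat -> R.

Definition conv a b m n := \sum_(0 <= k < m.+1) \sum_(0 <= j < n.+1) a k j * b (m - k)%N (n - j)%N.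

Lemma sum_rev (F : nat -> R) M : \sum_(0 <= k < M.+1) F k = \sum_(0 <= k < M.+1) F (M - k)%N.
Proof. by rewrite big_nat_rev /= add0n; apply: eq_bigr => k _; rewrite subSS. Qed.

Lemma conv_sv a b m n : conv (sv a) b m n = sv (conv a b) m n.
Proof.
case: n => [|n] /=.
  by rewrite /conv big1 // => k _; rewrite big_nat1 /= mul0r.
rewrite /conv; apply: eq_bigr => k _; rewrite big_nat_recl //= mul0r add0r.
by apply: eq_bigr => j _; rewrite subSS.
Qed.

Lemma conv_su a b m n : conv (su a) b m n = su (conv a b) m n.
Proof.
case: m => [|m] /=.
  by rewrite /conv big_nat1 big1 // => j _; rewrite /= mul0r.
rewrite /conv big_nat_recl //= big1 ?add0r => [|j _]; last by rewrite mul0r.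
by apply: eq_bigr => k _; rewrite subSS.
Qed.

Lemma conv_rec g c : (forall k j, (k.+1)%:R * g k.+1 j = 2 * c * g k j - sv g k j - 2 * su g k j) ->
  forall m n, (m.+1)%:R * conv g g m.+1 n = 2 * (2 * c * conv g g m n - sv (conv g g) m n - 2 * su (conv g g) m n).
Proof.
move=> Hg m n.
set M := m.+1.
pose W := \sum_(0 <= k < M.+1) \sum_(0 <= j < n.+1) k%:R * (g k j * g (M - k)%N (n - j)%N).
have E1 : M%:R * conv g g M n = W + W.
  rewrite /conv mulr_sumr.
  transitivity (W + \sum_(0 <= k < M.+1) \sum_(0 <= j < n.+1) (M - k)%:R * (g k j * g (M - k)%N (n - j)%N)).
    rewrite /W -big_split /=; apply: eq_big_nat => k /andP[_ hk].
    rewrite mulr_sumr -big_split /=; apply: eq_bigr => j _.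
    by rewrite -mulrDl -natrD subnKC.
  congr (_ + _); rewrite /W sum_rev; apply: eq_big_nat => k /andP[_ hk].
  rewrite sum_rev; apply: eq_big_nat => j /andP[_ hj].
  have hk' : (k <= M)%N := hk; have hj' : (j <= n)%N := hj.
  rewrite !subKn //; congr (_ * _); exact: mulrC.
have E2 : W = 2 * c * conv g g m n - conv (sv g) g m n - 2 * conv (su g) g m n.
  rewrite /W /M big_nat_recl // big1 ?add0r => [|j _]; last by rewrite mul0r.
  transitivity (\sum_(0 <= k < m.+1) \sum_(0 <= j < n.+1)
     (2 * c * (g k j * g (m - k)%N (n - j)%N) - sv g k j * g (m - k)%N (n - j)%N
       - 2 * (su g k j * g (m - k)%N (n - j)%N))).
    apply: eq_bigr => k _; apply: eq_bigr => j _.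
    rewrite subSS mulrA Hg; ring.
  rewrite /conv !mulr_sumr -!sumrB; apply: eq_bigr => k _.
  by rewrite !mulr_sumr -!sumrB.
rewrite E1 E2 conv_sv conv_su; ring.
Qed.
End C.
Arguments conv {R}.

Section M.
Variable R : rcfType.

Lemma svS (f : nat -> nat -> R) k j : sv f k j.+1 = f k j. Proof. by []. Qed.
Lemma sv0 (f : nat -> nat -> R) k : sv f k 0 = 0. Proof. by []. Qed.
Lemma suS (f : nat -> nat -> R) k j : su f k.+1 j = f k j. Proof. by []. Qed.
Lemma su0 (f : nat -> nat -> R) j : su f 0 j = 0. Proof. by []. Qed.

Lemma H20 n : H2 R 0 n = 'X^n. Proof. by rewrite /H2. Qed.

Lemma conv0 (x : R) n : conv (gg x) (gg x) 0 n = (2 * x) ^+ n / (n`!)%:R.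
Proof.
rewrite /conv big_nat1 (_ : 2 * x = x + x); last by ring.
rewrite exprDn big_mkord mulr_suml; apply: eq_bigr => [[j hj]] _ /=.
have hj' : (j <= n)%N := hj.
rewrite /gg !H20 !hornerXn subn0 -(bin_fact hj') !natrM fact0.
have := factR_neq0 R j; have := factR_neq0 R (n - j) => ? ?.
have : ('C(n, j))%:R != 0 :> R by rewrite pnatr_eq0 -lt0n bin_gt0.
move=> ?.
rewrite -mulr_natr.
by field; repeat (apply/andP; split).
Qed.

Lemma r2 : Num.sqrt (2 : R) * Num.sqrt 2 = 2.
Proof. by rewrite -expr2 sqr_sqrtr // ler0n. Qed.

Lemma r0 : Num.sqrt (2 : R) != 0.
Proof. by rewrite sqrtr_eq0 -ltNge ltr0n. Qed.

Definition PP (t : R) m n := gg t m n = (1 / Num.sqrt 2) ^+ (m + n) *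
   conv (gg (t / Num.sqrt 2)) (gg (t / Num.sqrt 2)) m n.

Lemma P0 t n : PP t 0 n.
Proof.
rewrite /PP conv0 add0n (mulrA ((1 / Num.sqrt 2) ^+ n)) -exprMn.
have -> : 1 / Num.sqrt 2 * (2 * (t / Num.sqrt 2)) = t.
  have := r0; have := r2 => h1 h2.
  rewrite -{2}h1; field; exact: h2.
rewrite /gg H20 hornerXn fact0 mul1r.
by [].
Qed.

Lemma Pstep t m : (forall n, PP t m n) -> (forall n, (0 < m)%N -> PP t m.-1 n) ->
  forall n, PP t m.+1 n.
Proof.
move=> IH IH' n; rewrite /PP.
apply: (mulfI (natS_neq0 R m)).
rewrite gg_rec (mulrCA (m.+1)%:R) (@conv_rec R _ _ (@gg_rec R (t / Num.sqrt 2))).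
rewrite /PP in IH IH'.
case: n => [|n]; case: m IH IH' => [|m] IH IH';
  rewrite ?sv0 ?su0 ?svS ?suS !IH ?IH' // ?succnK;
  rewrite ?addSn ?addnS ?add0n ?addn0 ?exprS ?expr0.
all: have h1 := r2; have h2 := r0.
all: set r := Num.sqrt (2 : R) in h1 h2 *.
all: rewrite -h1.
all: clearbody r; set T := conv _ _.
all: by field.
Qed.


Lemma Pall t m : (forall n, PP t m n) /\ (forall n, PP t m.+1 n).
Proof.
elim: m => [|m [IH1 IH2]].
  split; first exact: P0.
  apply: Pstep; first exact: P0.
  by [].
split; first exact: IH2.
apply: Pstep => //.
Qed.
End M.

Theorem mainTheorem10 (R : rcfType) (m n : nat) (t : R) :
  (H2 R m n).[t] =
  (m`!)%:R * (n`!)%:R * (1 / Num.sqrt 2) ^+ (m + n) *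
  \sum_(0 <= k < m.+1) \sum_(0 <= j < n.+1)
     ((H2 R k j).[t / Num.sqrt 2] / ((k`!)%:R * (j`!)%:R)) *
     ((H2 R (m - k) (n - j)).[t / Num.sqrt 2] /
        (((m - k)`!)%:R * ((n - j)`!)%:R)).
Proof.
have := (@Pall R t m).1 n; rewrite /PP /gg /conv -mulrA => <-.
have := factR_neq0 R m; have := factR_neq0 R n => ? ?.
by field; apply/andP; split.
Qed.
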